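(* Let $\mathcal H$ be a complex Hilbert space and $T\in\mathcal B(\mathcal H)$ left-invertible with $0\in\sigma(T)$, and let $T'=T(T^*T)^{-1}$. Then: (i) if $\sigma_r(T')\subseteq\overline{\mathbb D}$, then $\mathbb D\subseteq\sigma_r(T)\setminus\sigma_l(T)$; (ii) if $\|T\|\le1$ and $\sigma_r(T')\subseteq\overline{\mathbb D}$, then $\sigma_r(T)=\sigma(T)=\overline{\mathbb D}$.
   Context: $\mathbb D$ is the open unit disc; $\sigma_l$, $\sigma_r$ denote the left and right spectrum (set of $\lambda$ with $A-\lambda I$ not left-, resp. not right-, invertible). *)

(* Defs.v *)
From HB Require Import structures.
From mathcomp Require Import all_boot all_order all_algebra.
From mathcomp Require Import all_classical all_reals all_analysis.
From mathcomp Require Import complex.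
Set Implicit Arguments. Unset Strict Implicit. Unset Printing Implicit Defensive.
Import Order.TTheory GRing.Theory Num.Theory.
Local Open Scope ring_scope.

Definition is_inner (R : realType) (V : normedModType R[i]) (ip : V -> V -> R[i]) : Prop :=
  (forall (a : R[i]) (x y z : V), ip (a *: x + y) z = a * ip x z + ip y z) /\
  (forall x y : V, ip y x = (ip x y)^*) /\
  (forall x : V, ip x x = `|x| ^+ 2).

Definition bounded_op (R : realType) (V : normedModType R[i]) (A : V -> V) : Prop :=
  (forall (a : R[i]) (x y : V), A (a *: x + y) = a *: A x + A y) /\
  exists M : R[i], forall x : V, `|A x| <= M * `|x|.

Definition is_adjoint (R : realType) (V : normedModType R[i]) (ip : V -> V -> R[i])
  (A B : V -> V) : Prop := forall x y : V, ip (A x) y = ip x (B y).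

Definition left_invertible (R : realType) (V : normedModType R[i]) (A : V -> V) : Prop :=
  exists S : V -> V, bounded_op S /\ forall x, S (A x) = x.
Definition right_invertible (R : realType) (V : normedModType R[i]) (A : V -> V) : Prop :=
  exists S : V -> V, bounded_op S /\ forall x, A (S x) = x.
Definition invertible (R : realType) (V : normedModType R[i]) (A : V -> V) : Prop :=
  exists S : V -> V, bounded_op S /\ (forall x, S (A x) = x) /\ (forall x, A (S x) = x).

Definition shift_op (R : realType) (V : normedModType R[i]) (A : V -> V) (l : R[i]) : V -> V :=
  fun x => A x - l *: x.

Definition spec (R : realType) (V : normedModType R[i]) (A : V -> V) : set R[i] :=
  [set l | ~ invertible (shift_op A l)].
Definition lspec (R : realType) (V : normedModType R[i]) (A : V -> V) : set R[i] :=
  [set l | ~ left_invertible (shift_op A l)].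
Definition rspec (R : realType) (V : normedModType R[i]) (A : V -> V) : set R[i] :=
  [set l | ~ right_invertible (shift_op A l)].

Definition open_disc (R : realType) : set R[i] := [set l | `|l| < 1].
Definition closed_disc (R : realType) : set R[i] := [set l | `|l| <= 1].

(* Main.v *)
Require Import Defs.
From HB Require Import structures.
From mathcomp Require Import all_boot all_order all_algebra.
From mathcomp Require Import all_classical all_reals all_analysis.
From mathcomp Require Import complex.
From mathcomp Require Import ring lra.
Import Order.TTheory GRing.Theory Num.Theory.
Local Open Scope ring_scope.
Local Open Scope classical_set_scope.
Set Implicit Arguments. Unset Strict Implicit. Unset Printing Implicit Defensive.

Section Basics.
Variable R : realType.
Local Notation Re := (@complex.Re R).
Local Notation Im := (@complex.Im R).
Local Notation C := (R[i]).

Lemma ge0_complex (z : C) : 0 <= z -> z = (Re z)%:C%C.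
Proof. by case: z => a b; rewrite lecE /= => /andP[/eqP -> _]. Qed.

Definition nc (z : C) : R := Re `|z|.
Lemma ncE (z : C) : `|z| = (nc z)%:C%C.
Proof. exact/ge0_complex. Qed.
Lemma nc_ge0 z : 0 <= nc z.
Proof. by have := normr_ge0 z; rewrite ncE lecR. Qed.
Lemma ncM a b : nc (a * b) = nc a * nc b.
Proof. by apply/complexI; rewrite -!ncE normrM !ncE -rmorphM. Qed.
Lemma ncD a b : nc (a + b) <= nc a + nc b.
Proof. by have := ler_normD a b; rewrite !ncE -rmorphD lecR. Qed.
Lemma ncR (r : R) : nc r%:C%C = `|r|.
Proof. by rewrite /nc normc_def /= expr0n /= addr0 sqrtr_sqr. Qed.
Lemma ncN a : nc (- a) = nc a.
Proof. by rewrite /nc normrN. Qed.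
Lemma ncV a : nc (a^-1) = (nc a)^-1.
Proof. by apply/complexI; rewrite -ncE normfV ncE fmorphV. Qed.
Lemma nc_eq0 a : (nc a == 0) = (a == 0).
Proof. by rewrite -[a == 0]normr_eq0 ncE (inj_eq (@complexI R)). Qed.
Lemma ncJ a : nc (a^*)%C = nc a.
Proof. by rewrite /nc normcJ. Qed.
Lemma nc1 : nc 1 = 1.
Proof. by rewrite /nc normr1. Qed.
Lemma lec_real (a b : R) : (a%:C <= b%:C)%C = (a <= b). Proof. exact: lecR. Qed.

Variable V : completeNormedModType C.
Definition nv (v : V) : R := Re `|v|.
Lemma nvE (v : V) : `|v| = (nv v)%:C%C.
Proof. exact/ge0_complex. Qed.
Lemma nv_ge0 v : 0 <= nv v.
Proof. by have := normr_ge0 v; rewrite nvE lecR. Qed.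
Lemma nvD u v : nv (u + v) <= nv u + nv v.
Proof. by have := ler_normD u v; rewrite !nvE -rmorphD lecR. Qed.
Lemma nvN u : nv (- u) = nv u.
Proof. by rewrite /nv normrN. Qed.
Lemma nvZ a u : nv (a *: u) = nc a * nv u.
Proof. by apply/complexI; rewrite -nvE normrZ nvE ncE -rmorphM. Qed.
Lemma nv0 : nv 0 = 0.
Proof. by rewrite /nv normr0. Qed.
Lemma nv_eq0 u : (nv u == 0) = (u == 0).
Proof. by rewrite -[u == 0]normr_eq0 nvE (inj_eq (@complexI R)). Qed.
Lemma nvB u v : nv (u - v) = nv (v - u).
Proof. by rewrite -nvN opprB. Qed.
Lemma nvDl u v : nv u - nv v <= nv (u + v).
Proof. have := nvD (u + v) (- v); rewrite addrK nvN; lra. Qed.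

Definition lin (A : V -> V) := forall a x y, A (a *: x + y) = a *: A x + A y.
Definition bndR (A : V -> V) (M : R) := forall x, nv (A x) <= M * nv x.

Section Lin.
Variables (A : V -> V) (hA : lin A).
Lemma lin0 : A 0 = 0.
Proof. have := hA 1 0 0; rewrite !scale1r addr0 => h. by apply: (@addrI _ (A 0)); rewrite addr0 -h. Qed.
Lemma linD x y : A (x + y) = A x + A y.
Proof. by have := hA 1 x y; rewrite !scale1r. Qed.
Lemma linZ a x : A (a *: x) = a *: A x.
Proof. by rewrite -[a *: x]addr0 hA lin0 addr0. Qed.
Lemma linN x : A (- x) = - A x.
Proof. by rewrite -scaleN1r linZ scaleN1r. Qed.
Lemma linB x y : A (x - y) = A x - A y.
Proof. by rewrite linD linN. Qed.
End Lin.

Lemma bounded_opP A : bounded_op A -> lin A /\ exists M, 0 < M /\ bndR A M.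
Proof.
case=> hl [[a b] hM]; split => //; exists (`|a| + 1); split; first by rewrite ltr_pwDr // normr_ge0.
move=> x; have := hM x; rewrite !nvE lecE /=.
rewrite !mulr0 !subr0 => /andP[_ h]; apply: (le_trans h).
by rewrite ler_wpM2r ?nv_ge0 // (le_trans (ler_norm a)) // lerDl.
Qed.

Lemma bounded_opI A M : lin A -> bndR A M -> bounded_op A.
Proof.
move=> hl hb; split => //; exists M%:C%C => x.
by rewrite !nvE -rmorphM lecR.
Qed.


Lemma small_pow (q eps : R) : 0 <= q < 1 -> 0 < eps -> exists N, q ^+ N < eps.
Proof.
move=> /andP[q0 q1] e0.
have := @cvg_expr R q; rewrite ger0_norm // => /(_ q1) /cvgrPdist_lt /(_ eps e0).
move=> [N _ HN]; exists N; have := HN N (leqnn N); rewrite /= sub0r normrN ger0_norm //.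
exact: exprn_ge0.
Qed.

Lemma neumann (Q : V -> V) (q : R) : lin Q -> 0 <= q < 1 -> bndR Q q ->
  forall y, exists x, x - Q x = y.
Proof.
move=> hQ /andP[q0 q1] hb y.
pose u n := iter n (fun x => y + Q x) 0.
have us n : u n.+1 = y + Q (u n) by [].
have d1 n : nv (u n.+1 - u n) <= q ^+ n * nv y.
  elim: n => [|n IH].
    by rewrite us /u /= lin0 // !addr0 subr0 expr0 mul1r.
  have -> : u n.+2 - u n.+1 = Q (u n.+1 - u n).
    by rewrite linB // (us n.+1) (us n) opprD addrACA subrr add0r.
  apply: (le_trans (hb _)); rewrite exprS -mulrA; exact: ler_wpM2l.
have hq : 0 <= 1 - q by rewrite subr_ge0 ltW.
have dd n d : (1 - q) * nv (u (n + d)%N - u n) <= (q ^+ n - q ^+ (n + d)) * nv y.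
  elim: d => [|d IH]; first by rewrite addn0 subrr nv0 mulr0 subrr mul0r.
  have e : u (n + d.+1)%N - u n = (u (n + d).+1 - u (n + d)%N) + (u (n + d)%N - u n).
    by rewrite addnS addrA subrK.
  rewrite e addnS exprS.
  move: (nvD (u (n + d).+1 - u (n + d)%N) (u (n + d)%N - u n)) (d1 (n+d)%N) IH.
  move: (nv ((u (n + d).+1 - u (n + d)%N) + (u (n + d)%N - u n))) => c.
  move: (nv (u (n + d).+1 - u (n + d)%N)) (nv (u (n + d)%N - u n)) => a b h1 h2 IH.
  have hny := nv_ge0 y. have hp := exprn_ge0 (n + d) q0.
  have h3 := ler_wpM2l hq h1.
  have h4 := ler_wpM2l hq h2.
  nra.
have cu : cvgn u.
  apply/cauchy_cvgP/cauchy_ballP => e e0.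
  have e0' : 0 < Re e by move: e0; rewrite ltcE /= => /andP[].
  have he := ge0_complex (ltW e0).
  have [N hN] : exists N, q ^+ N * nv y < Re e * (1 - q).
    have [->|ny0] := eqVneq (nv y) 0.
      by exists 0%N; rewrite mulr0 mulr_gt0 // subr_gt0.
    have nyp : 0 < nv y by rewrite lt_neqAle eq_sym ny0 nv_ge0.
    have qq : 0 <= q < 1 by rewrite q0 q1.
    have [|N hN] := @small_pow q (Re e * (1 - q) / nv y) qq.
      by rewrite divr_gt0 // mulr_gt0 // subr_gt0.
    by exists N; rewrite -ltr_pdivlMr.
  have key n m : (N <= n)%N -> (n <= m)%N -> nv (u m - u n) < Re e.
    move=> Nn nm; have := dd n (m - n)%N; rewrite subnKC //.
    have h1 : 0 <= q ^+ m * nv y by rewrite mulr_ge0 ?nv_ge0 ?exprn_ge0.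
    have h2 : q ^+ n * nv y <= q ^+ N * nv y.
      by rewrite ler_wpM2r ?nv_ge0 // ler_wiXn2l // ltW.
    have hq1 : 0 < 1 - q by rewrite subr_gt0.
    move=> h3; rewrite -(ltr_pM2l hq1) mulrC; nra.
  near_simpl.
  exists ([set n | N <= n], [set n | N <= n])%N; first by split; exists N.
  move=> [n m] [/= Nn Nm]. rewrite -ball_normE /=.
  rewrite he nvE ltcR; case/orP: (leq_total n m) => nm.
    by rewrite nvB; apply: key.
  by apply: key => //; apply: leq_trans Nm nm.
have hl : u @ \oo --> limn u := cu.
set l := limn u in hl *.
exists l.
suff : nv (l - (y + Q l)) == 0.
  by rewrite nv_eq0 subr_eq0 => /eqP {1}->; rewrite addrK.
rewrite eq_le nv_ge0 andbT; apply/negP => /negP; rewrite -ltNge => d0.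
set d := nv _ in d0.
have [|N _ HN] := (cvgrPdist_lt _ _).1 hl (d / 2)%:C%C.
  by rewrite ltcR divr_gt0.
have := HN N (leqnn N); have := HN N.+1 (leqnSn N).
rewrite /= !nvE !ltcR => h1 h2.
have e : l - (y + Q l) = (l - u N.+1) + Q (u N - l).
  by rewrite linB // us !opprD !addrA subrK.
have h3 := nvD (l - u N.+1) (Q (u N - l)).
have h4 := hb (u N - l); rewrite nvB in h4.
have h5 := nv_ge0 (l - u N).
rewrite -e -/d in h3; nra.
Qed.


Lemma inv_below_surj (A : V -> V) (c : R) : lin A -> 0 < c ->
  (forall x, c * nv x <= nv (A x)) -> (forall y, exists x, A x = y) ->
  invertible A.
Proof.
move=> hA c0 hb hs.
have inj : forall x x', A x = A x' -> x = x'.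
  move=> x x' e; apply/eqP; rewrite -subr_eq0 -nv_eq0 eq_le nv_ge0 andbT.
  have := hb (x - x'); rewrite linB // e subrr nv0.
  by rewrite pmulr_rle0.
pose S y := proj1_sig (cid (hs y)).
have AS y : A (S y) = y by rewrite /S; case: (cid _).
exists S; split; last by split => // x; apply: inj; rewrite AS.
apply: (@bounded_opI _ c^-1).
  by move=> a x y; apply: inj; rewrite hA !AS.
move=> y; rewrite ler_pdivlMl // -{2}(AS y); exact: hb.
Qed.

Lemma bounded_comp (A B : V -> V) : bounded_op A -> bounded_op B ->
  bounded_op (fun x => A (B x)).
Proof.
move=> /bounded_opP[hA [M [M0 hM]]] /bounded_opP[hB [N [N0 hN]]].
apply: (@bounded_opI _ (M * N)).
  by move=> a x y; rewrite hB hA.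
move=> x; apply: (le_trans (hM _)); rewrite -mulrA; have h := ler_wpM2l (ltW M0) (hN x); exact h.
Qed.

Variable ip : V -> V -> C.
Hypothesis Hip : is_inner ip.

Lemma ipl a x y z : ip (a *: x + y) z = a * ip x z + ip y z.
Proof. by case: Hip. Qed.
Lemma ipC x y : ip y x = (ip x y)^*%C.
Proof. by case: Hip => _ []. Qed.
Lemma ipn x : ip x x = ((nv x) ^+ 2)%:C%C.
Proof. by case: Hip => _ [] _ ->; rewrite nvE rmorphXn. Qed.
Lemma ipDl x y z : ip (x + y) z = ip x z + ip y z.
Proof. by have := ipl 1 x y z; rewrite scale1r mul1r. Qed.
Lemma ip0l z : ip 0 z = 0.
Proof. have := ipl 1 0 0 z; rewrite scale1r addr0 mul1r => h. by apply: (@addrI _ (ip 0 z)); rewrite addr0 -h. Qed.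
Lemma ipZl a x z : ip (a *: x) z = a * ip x z.
Proof. by rewrite -[a *: x]addr0 ipl ip0l addr0. Qed.
Lemma ipNl x z : ip (- x) z = - ip x z.
Proof. by rewrite -scaleN1r ipZl mulN1r. Qed.
Lemma ipBl x y z : ip (x - y) z = ip x z - ip y z.
Proof. by rewrite ipDl ipNl. Qed.
Lemma ipDr x y z : ip z (x + y) = ip z x + ip z y.
Proof. by rewrite ![ip z _]ipC ipDl rmorphD. Qed.
Lemma ipZr a x z : ip z (a *: x) = a^*%C * ip z x.
Proof. by rewrite ![ip z _]ipC ipZl rmorphM. Qed.
Lemma ip0r z : ip z 0 = 0.
Proof. by rewrite ipC ip0l conjc0. Qed.
Lemma ipNr x z : ip z (- x) = - ip z x.
Proof. by rewrite ![ip z _]ipC ipNl rmorphN. Qed.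
Lemma ipBr x y z : ip z (x - y) = ip z x - ip z y.
Proof. by rewrite ipDr ipNr. Qed.

Lemma mulcJ (a : C) : a * a^*%C = ((nc a) ^+ 2)%:C%C.
Proof. by rewrite -sqr_normc ncE rmorphXn. Qed.

Lemma CS x y : nc (ip x y) <= nv x * nv y.
Proof.
set a := ip x y; set n := nv y ^+ 2.
have [y0|ny0] := eqVneq y 0.
  by rewrite /a y0 ip0r /nc normr0 nv0 mulr0.
have n0 : 0 < n by rewrite exprn_gt0 // lt_neqAle eq_sym nv_eq0 ny0 nv_ge0.
pose z := n%:C%C *: x - a *: y.
have e : ip z z = n%:C%C * (n%:C%C * (nv x ^+ 2)%:C%C - a * a^*%C).
  rewrite /z !ipBl !ipBr !ipZl !ipZr ipn (ipn y) -/n (ipC x y) -/a conjc_real.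
  ring.
have e2 : ip z z = (n * (n * nv x ^+ 2 - nc a ^+ 2))%:C%C.
  have gen : forall u v w : R, (w%:C * (w%:C * u%:C - v%:C) = (w * (w * u - v))%:C)%C.
    by move=> u v w; rewrite rmorphM rmorphB rmorphM.
  by rewrite e mulcJ gen.
have : 0 <= n * (n * nv x ^+ 2 - nc a ^+ 2).
  by rewrite -lecR -e2 ipn lecR exprn_ge0 // nv_ge0.
rewrite pmulr_rge0 // subr_ge0 /n -exprMn => h.
by rewrite -(ler_pXn2r (isT : (0 < 2)%N)) ?nnegrE ?mulr_ge0 ?nv_ge0 ?nc_ge0 // mulrC.
Qed.


Lemma sq_le (a b : R) : 0 <= a -> 0 <= b -> a ^+ 2 <= b ^+ 2 -> a <= b.
Proof. by move=> a0 b0; rewrite (ler_pXn2r (isT : (0 < 2)%N)) ?nnegrE. Qed.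

Lemma left_inv_below (A As : V -> V) (c : R) : bounded_op A -> bounded_op As ->
  (forall x y, ip (A x) y = ip x (As y)) -> 0 < c ->
  (forall x, c * nv x <= nv (A x)) -> left_invertible A.
Proof.
move=> bA bAs hadj c0 hc.
have [lA [M [M0 hM]]] := bounded_opP bA.
have [lAs [M' [M'0 hM']]] := bounded_opP bAs.
pose P x := As (A x).
have lP : lin P by move=> a x y; rewrite /P lA lAs.
have bP : bounded_op P by exact: bounded_comp.
have hP x : nv (P x) <= M' * M * nv x.
  by rewrite -mulrA; apply: le_trans (hM' _) _; have h := ler_wpM2l (ltW M'0) (hM x); exact h.
have ipP x : ip x (P x) = ((nv (A x)) ^+ 2)%:C%C by rewrite -hadj ipn.
have ipP' x : ip (P x) x = ((nv (A x)) ^+ 2)%:C%C by rewrite ipC ipP conjc_real.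
have hPb x : c ^+ 2 * nv x <= nv (P x).
  have h1 := CS x (P x); rewrite ipP ncR ger0_norm ?exprn_ge0 ?nv_ge0 // in h1.
  have h2 := hc x; have h3 := nv_ge0 x; have h4 := nv_ge0 (P x).
  have h5 : (c * nv x) ^+ 2 <= nv (A x) ^+ 2.
    by rewrite (ler_pXn2r (isT : (0 < 2)%N)) ?nnegrE ?mulr_ge0 ?nv_ge0 // ltW.
  have [->|nx0] := eqVneq (nv x) 0; first by rewrite mulr0.
  have nxp : 0 < nv x by rewrite lt_neqAle eq_sym nx0 h3.
  rewrite -(ler_pM2r nxp); nra.
pose N0 := M' * M; pose N' := N0 ^+ 2 + c ^+ 4; pose t := c ^+ 2 / N'.
have N'0 : 0 < N' by rewrite ltr_pwDr ?exprn_gt0 ?sqr_ge0.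
have t0 : 0 < t by rewrite divr_gt0 ?exprn_gt0.
pose s := t * c ^+ 2.
have s0 : 0 < s by rewrite mulr_gt0 ?exprn_gt0.
have s1 : s <= 1.
  rewrite /s /t mulrAC -expr2 -exprM ler_pdivrMr // mul1r /N' lerDr sqr_ge0 //.
have ts : t ^+ 2 * N0 ^+ 2 <= s.
  rewrite /s expr2 -mulrA (ler_pM2l t0) /t mulrAC ler_pdivrMr //.
  by rewrite (ler_pM2l (exprn_gt0 2 c0)) /N' lerDl exprn_ge0 // ltW.
pose Q x := x - t%:C%C *: P x.
have lQ : lin Q.
  by move=> a x y; rewrite /Q lP scalerDr scalerA mulrC -scalerA opprD addrACA scalerBr.
have hQ x : nv (Q x) <= (1 - s / 2) * nv x.
  have e : ((nv (Q x)) ^+ 2)%:C%C = (nv x ^+ 2 - 2 * t * nv (A x) ^+ 2 + t ^+ 2 * nv (P x) ^+ 2)%:C%C.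
    rewrite -ipn /Q !ipBl !ipBr !ipZl !ipZr ipP ipP' !ipn conjc_real.
    move: (nv x ^+ 2) (nv (A x) ^+ 2) (nv (P x) ^+ 2) => u v w.
    rewrite !rmorphD !rmorphN !rmorphM /= rmorph_nat. ring.
  have {}e := complexI e.
  have q'0 : 0 <= 1 - s / 2 by lra.
  apply: sq_le; [exact: nv_ge0 | by rewrite mulr_ge0 ?nv_ge0 | ].
  rewrite e.
  have h1 := hc x; have h3 := nv_ge0 x.
  have h5 : c ^+ 2 * nv x ^+ 2 <= nv (A x) ^+ 2.
    by rewrite -exprMn (ler_pXn2r (isT : (0 < 2)%N)) ?nnegrE ?mulr_ge0 ?nv_ge0 ?(ltW c0).
  have h6 : nv (P x) ^+ 2 <= N0 ^+ 2 * nv x ^+ 2.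
    by rewrite -exprMn (ler_pXn2r (isT : (0 < 2)%N)) ?nnegrE ?mulr_ge0 ?nv_ge0 ?(ltW M0) ?(ltW M'0) ?hP.
  have h7 : t ^+ 2 * nv (P x) ^+ 2 <= s * nv x ^+ 2.
    apply: le_trans (_ : t ^+ 2 * (N0 ^+ 2 * nv x ^+ 2) <= _).
      by rewrite ler_pM2l ?exprn_gt0.
    by rewrite mulrA; have h := ler_wpM2r (sqr_ge0 (nv x)) ts; exact h.
  have h8 : s * nv x ^+ 2 <= t * nv (A x) ^+ 2.
    by rewrite /s -mulrA ler_pM2l.
  have h9 := sqr_ge0 (nv x).
  have h10 : 0 <= s ^+ 2 * nv x ^+ 2 by rewrite mulr_ge0 ?sqr_ge0.
  clearbody s t; rewrite -mulrA [X in _ <= X]exprMn; nra.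
have lsurj : forall y, exists x, P x = y.
  move=> y; have q01 : 0 <= 1 - s / 2 < 1 by apply/andP; split; lra.
  have [x hx] := neumann lQ q01 hQ (t%:C%C *: y).
  exists x; have h : t%:C%C *: P x = t%:C%C *: y by rewrite -hx /Q opprB addrC subrK.
  have tC0 : t%:C%C != 0 by rewrite eq_complex /= negb_and gt_eqF.
  by rewrite -[P x]scale1r -[y]scale1r -(mulVf tC0) -!scalerA h.
have [Sp [bSp [hS1 hS2]]] := inv_below_surj lP (exprn_gt0 2 c0) hPb lsurj.
exists (fun y => Sp (As y)); split; first exact: bounded_comp.
by move=> x; exact: hS1.
Qed.


Lemma perturb (A E : V -> V) (c e : R) : lin A -> lin E -> invertible A -> 0 < c ->
  (forall x, c * nv x <= nv (A x)) -> 0 <= e -> e < c -> bndR E e ->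
  invertible (fun x => A x + E x).
Proof.
move=> lA lE [S [bS [SA AS]]] c0 hc e0 ec hE.
have [lS _] := bounded_opP bS.
apply: (@inv_below_surj _ (c - e)).
- by move=> a x y; rewrite lA lE scalerDr addrACA.
- by rewrite subr_gt0.
- move=> x; have h1 := nvDl (A x) (E x); have h2 := hc x; have h3 := hE x.
  have h4 := nv_ge0 x; nra.
- move=> y.
  pose Q z := - E (S z).
  have lQ : lin Q by move=> a x z; rewrite /Q lS lE opprD scalerN.
  have hS z : nv (S z) <= c^-1 * nv z.
    by rewrite ler_pdivlMl // -{2}(AS z); exact: hc.
  have q01 : 0 <= e / c < 1.
    by apply/andP; split; [rewrite divr_ge0 // ltW | rewrite ltr_pdivrMr // mul1r].
  have hQ : bndR Q (e / c).
    move=> z; rewrite /Q nvN; apply: le_trans (hE _) _.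
    rewrite mulrC -mulrA; have h := ler_wpM2l e0 (hS z); rewrite mulrC.
    by apply: le_trans h _; rewrite mulrA [e * _]mulrC.
  have [z hz] := neumann lQ q01 hQ y.
  by exists (S z); rewrite AS -hz /Q opprK.
Qed.

Lemma comm_inv (A : V -> V) : left_invertible A -> right_invertible A -> invertible A.
Proof.
move=> [S [_ hS]] [Rr [bR hR]]; exists Rr; split => //; split => // x.
by rewrite -[LHS]hS hR hS.
Qed.

Lemma shift_lin (A : V -> V) l : lin A -> lin (shift_op A l).
Proof.
move=> hA a x y; rewrite /shift_op hA scalerDr scalerBr !scalerA mulrC.
by rewrite opprD addrACA.
Qed.

Lemma shift_bnd (A : V -> V) l : bounded_op A -> bounded_op (shift_op A l).
Proof.
move=> /bounded_opP[hA [M [M0 hM]]]; apply: (@bounded_opI _ (M + nc l)).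
  exact: shift_lin.
move=> x; rewrite /shift_op; apply: le_trans (nvD _ _) _; rewrite nvN nvZ mulrDl.
by apply: lerD => //.
Qed.


Lemma lerM2l' (a x y : R) : 0 <= a -> x <= y -> a * x <= a * y.
Proof. by move=> h1 h2; have h := ler_wpM2l h1 h2; exact h. Qed.

Lemma nc_le1 (l : C) : (`|l| <= 1) = (nc l <= 1).
Proof. by rewrite ncE -(rmorph1 (real_complex R)) lecR. Qed.
Lemma nc_lt1 (l : C) : (`|l| < 1) = (nc l < 1).
Proof. by rewrite ncE -(rmorph1 (real_complex R)) ltcR. Qed.

Section Main.
Variables (T Tstar B : V -> V).
Hypotheses (HT : bounded_op T) (Hlinv : left_invertible T) (H0 : spec T 0)
  (HTstar : bounded_op Tstar) (Hadj : is_adjoint ip T Tstar)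
  (HB : bounded_op B) (HB1 : forall x, B (Tstar (T x)) = x)
  (HB2 : forall x, Tstar (T (B x)) = x).

Lemma Bsym x y : ip (B x) y = ip x (B y).
Proof.
have e1 : ip (B x) y = ip (T (B x)) (T (B y)) by rewrite Hadj HB2.
have e2 : ip x (B y) = ip (T (B x)) (T (B y)).
  by rewrite -{1}[x]HB2 ipC -Hadj -ipC.
by rewrite e1 e2.
Qed.

Lemma shift0 (A : V -> V) : shift_op A 0 = A.
Proof. by apply/funext => x; rewrite /shift_op scale0r subr0. Qed.

Lemma below (l : C) : rspec (fun x => T (B x)) `<=` @closed_disc R -> nc l < 1 ->
  exists2 c, 0 < c & forall x, c * nv x <= nv (shift_op T l x).
Proof.
move=> hsp l1.
have [lT [MT [MT0 hMT]]] := bounded_opP HT.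
have [lTs [MTs [MTs0 hMTs]]] := bounded_opP HTstar.
have [lB [MB [MB0 hMB]]] := bounded_opP HB.
have [->|l0] := eqVneq l 0.
  case: Hlinv => S [/bounded_opP[_ [MS [MS0 hMS]]] hS].
  exists MS^-1; first by rewrite invr_gt0.
  by move=> x; rewrite shift0 mulrC ler_pdivrMr // mulrC; have := hMS (T x); rewrite hS.
pose mu := (l^*%C)^-1.
have nl0 : 0 < nc l by rewrite lt_neqAle eq_sym nc_eq0 l0 nc_ge0.
have nmu : 1 < nc mu by rewrite /mu ncV ncJ invf_gt1.
have : ~ rspec (fun x => T (B x)) mu.
  by move=> /hsp; rewrite /closed_disc /= nc_le1 leNgt nmu.
move=> /contrapT [Rr [bR hR]].
have [lR [MR [MR0 hMR]]] := bounded_opP bR.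
pose K := MB * MTs * MR / nc l.
have K0 : 0 < K by rewrite /K divr_gt0 // !mulr_gt0.
exists K^-1; first by rewrite invr_gt0.
move=> x; rewrite ler_pdivrMl // mulrC.
set w := shift_op T l x.
have e1 : ip x x = ip (B (Tstar x) - l^-1 *: x) (Rr x).
  rewrite -{2}(hR x) /shift_op ipBr ipZr /mu conjc_inv conjcK ipBl ipZl.
  by congr (_ - _); rewrite ipC Hadj Bsym -ipC.
have e2 : B (Tstar x) - l^-1 *: x = - l^-1 *: B (Tstar w).
  rewrite /w /shift_op (linB lTs) (linZ lTs) (linB lB) (linZ lB) HB1 scalerBr scalerA.
  by rewrite mulNr mulVf // scaleN1r opprK scaleNr addrC.
have h1 := CS (B (Tstar x) - l^-1 *: x) (Rr x).
rewrite -e1 ipn ncR ger0_norm ?exprn_ge0 ?nv_ge0 // e2 nvZ ncN ncV in h1.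
have h2 := hMR x.
have h3 : nv (B (Tstar w)) <= MB * MTs * nv w.
  by rewrite -mulrA; apply: le_trans (hMB _) _; have h := ler_wpM2l (ltW MB0) (hMTs w); exact h.
have h4 := nv_ge0 x; have h5 := nv_ge0 (B (Tstar w)); have h6 := nv_ge0 (Rr x).
have [nx0|nx0] := eqVneq (nv x) 0; first by rewrite nx0 mulr_ge0 ?nv_ge0 ?ltW.
have nxp : 0 < nv x by rewrite lt_neqAle eq_sym nx0 h4.
rewrite -(ler_pM2r nxp).
have il0 : 0 <= (nc l)^-1 by rewrite invr_ge0 nc_ge0.
have h7 : (nc l)^-1 * nv (B (Tstar w)) * nv (Rr x) <=
          (nc l)^-1 * (MB * MTs * nv w) * (MR * nv x).
  apply: ler_pM => //; first by rewrite mulr_ge0.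
  by apply: ler_wpM2l.
have e3 : (nc l)^-1 * (MB * MTs * nv w) * (MR * nv x) = nv w * K * nv x.
  by rewrite /K; ring.
by rewrite -e3 -expr2; apply: le_trans h1 h7.
Qed.


Lemma linv (l : C) : rspec (fun x => T (B x)) `<=` @closed_disc R -> nc l < 1 ->
  left_invertible (shift_op T l).
Proof.
move=> hsp l1; have [c c0 hc] := below hsp l1.
apply: (left_inv_below (shift_bnd l HT) (shift_bnd (l^*%C) HTstar) _ c0 hc).
by move=> x y; rewrite /shift_op ipBl ipZl ipBr ipZr conjcK Hadj.
Qed.

Lemma scal_lin (a : C) : lin (fun x : V => a *: x).
Proof. by move=> b x y; rewrite scalerDr !scalerA mulrC. Qed.

Lemma loc (l1 l2 : C) c : 0 < c -> (forall x, c * nv x <= nv (shift_op T l1 x)) ->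
  nc (l1 - l2) < c / 2 ->
  invertible (shift_op T l1) <-> invertible (shift_op T l2).
Proof.
move=> c0 hc hl.
have [lT _] := bounded_opP HT.
have E1 : shift_op T l2 = fun x => shift_op T l1 x + (l1 - l2) *: x.
  by apply/funext => x; rewrite /shift_op scalerBl addrA subrK.
have E2 : shift_op T l1 = fun x => shift_op T l2 x + (l2 - l1) *: x.
  by apply/funext => x; rewrite /shift_op scalerBl addrA subrK.
have e0 := nc_ge0 (l1 - l2).
have e21 : nc (l2 - l1) = nc (l1 - l2) by rewrite -opprB ncN.
have hb2 : forall x, c / 2 * nv x <= nv (shift_op T l2 x).
  move=> x; rewrite E1; have h1 := nvDl (shift_op T l1 x) ((l1 - l2) *: x).
  rewrite nvZ in h1; have h2 := hc x; have h3 := nv_ge0 x; nra.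
split => hi.
  rewrite E1; apply: (@perturb _ _ c (nc (l1 - l2)) (shift_lin l1 lT) (@scal_lin (l1 - l2)) hi c0 hc e0).
    lra.
  by move=> x; rewrite nvZ.
rewrite E2; apply: (@perturb _ _ (c / 2) (nc (l2 - l1)) (shift_lin l2 lT) (@scal_lin (l2 - l1)) hi _ hb2).
- by rewrite divr_gt0.
- exact: nc_ge0.
- by rewrite e21.
- by move=> x; rewrite nvZ.
Qed.

Lemma main_i (l : C) : rspec (fun x => T (B x)) `<=` @closed_disc R -> nc l < 1 ->
  ~ right_invertible (shift_op T l).
Proof.
move=> hsp l1 hr.
have inv1 := comm_inv (linv hsp l1) hr.
pose f (s : R) := (s%:C%C * l).
have ncf s : 0 <= s <= 1 -> nc (f s) < 1.
  move=> /andP[s0 s1]; rewrite /f ncM ncR ger0_norm //.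
  by apply: le_lt_trans l1; rewrite ler_piMl ?nc_ge0.
have locf s : 0 <= s <= 1 -> exists2 d, 0 < d & forall s', `|s - s'| < d ->
    invertible (shift_op T (f s)) <-> invertible (shift_op T (f s')).
  move=> hs; have [c c0 hc] := below hsp (ncf s hs).
  exists (c / 2 / (nc l + 1)).
    by rewrite !divr_gt0 // ltr_pwDr // nc_ge0.
  move=> s' hs'; apply: (loc c0 hc).
  rewrite /f -mulrBl ncM -rmorphB ncR.
  have h1 := nc_ge0 l; have h2 := normr_ge0 (s - s').
  rewrite ltr_pdivlMr ?ltr_pwDr // in hs'.
  nra.
pose N := [set s : R | 0 <= s <= 1 /\ ~ invertible (shift_op T (f s))].
have N0 : N 0.
  split; first by rewrite lexx ler01.
  by rewrite /f mul0r.
have hsN : has_sup N.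
  split; first by exists 0.
  by exists 1 => s [/andP[]].
pose s0 := sup N.
have s00 : 0 <= s0 := sup_upper_bound hsN N0.
have s01 : s0 <= 1 by apply: ge_sup; [exists 0 | move=> s [/andP[]]].
have s0I : 0 <= s0 <= 1 by rewrite s00 s01.
have [d d0 hd] := locf s0 s0I.
have [s1 [s1I ns1] hs1] := sup_adherent d0 hsN.
have s1s0 : s1 <= s0 := sup_upper_bound hsN (conj s1I ns1).
have ns0 : ~ invertible (shift_op T (f s0)).
  have hs1d : `|s0 - s1| < d.
    have hs1p : s0 - d < s1 := hs1.
    by rewrite ger0_norm ?subr_ge0 //; lra.
  by move=> /(hd s1 hs1d).1.
have [s0lt|s0ge] := ltP s0 1.
  pose s2 := if s0 + d / 2 <= 1 then s0 + d / 2 else 1.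
  have s2I : 0 <= s2 <= 1 by rewrite /s2; case: ifP => h; apply/andP; split; lra.
  have s2gt : s0 < s2 by rewrite /s2; case: ifP => h; lra.
  have s2d : `|s0 - s2| < d.
    rewrite ltr0_norm ?subr_lt0 // opprB /s2; case: ifP => h; lra.
  have Ns2 : N s2 by split => // /(hd s2 s2d).2.
  have := sup_upper_bound hsN Ns2; rewrite -/s0; lra.
have s0e : s0 = 1 by lra.
apply: ns0; rewrite s0e /f mul1r; exact: inv1.
Qed.


Lemma spec_out (l : C) : (forall x, nv (T x) <= nv x) -> 1 < nc l ->
  invertible (shift_op T l).
Proof.
move=> hTn l1.
have [lT _] := bounded_opP HT.
have l0 : l != 0 by rewrite -nc_eq0 gt_eqF // (lt_trans ltr01).
apply: (@inv_below_surj _ (nc l - 1)).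
- exact: shift_lin.
- by rewrite subr_gt0.
- move=> x; have h := nvDl (- (l *: x)) (T x).
  rewrite nvN nvZ [- _ + T x]addrC in h; have h2 := hTn x.
  by rewrite /shift_op; lra.
- move=> y.
  pose Q x := l^-1 *: T x.
  have lQ : lin Q by move=> a x z; rewrite /Q lT scalerDr !scalerA mulrC.
  have q01 : 0 <= nc l^-1 < 1.
    by rewrite nc_ge0 /= ncV invf_lt1 // (lt_trans ltr01).
  have hQ : bndR Q (nc l^-1).
    by move=> x; rewrite /Q nvZ; apply: lerM2l'; [exact: nc_ge0 | exact: hTn].
  have [x hx] := neumann lQ q01 hQ (- (l^-1) *: y).
  exists x.
  have e : (- l) *: (x - Q x) = shift_op T l x.
    by rewrite /Q /shift_op scalerBr scalerA mulNr mulfV // scaleN1r opprK scaleNr addrC.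
  by rewrite -e hx scalerA mulrNN mulfV // scale1r.
Qed.

Lemma rclosed (l : C) : rspec (fun x => T (B x)) `<=` @closed_disc R -> nc l <= 1 ->
  ~ right_invertible (shift_op T l).
Proof.
move=> hsp l1 [Rr [bR hR]].
have [lR [MR [MR0 hMR]]] := bounded_opP bR.
pose t := (MR + 1)^-1.
have t0 : 0 < t by rewrite invr_gt0 addr_gt0.
have t1 : t < 1 by rewrite invf_lt1 ?addr_gt0 // ltrDr.
have tM : t * MR < 1 by rewrite mulrC ltr_pdivrMr ?addr_gt0 // mul1r ltrDl.
pose l' := (1 - t)%:C%C * l.
have l'1 : nc l' < 1.
  rewrite /l' ncM ncR ger0_norm ?subr_ge0 ?ltW //.
  have := nc_ge0 l; nra.
apply: (main_i hsp l'1).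
pose E y := (t%:C%C * l) *: Rr y.
have lE : lin E by move=> a x y; rewrite /E lR scalerDr !scalerA mulrC.
have hE : bndR E (t * nc l * MR).
  move=> x; rewrite /E nvZ ncM ncR ger0_norm ?(ltW t0) // -!mulrA.
  apply: lerM2l'; first exact: ltW.
  apply: lerM2l'; [exact: nc_ge0 | exact: hMR].
have id_inv : invertible (fun x : V => x).
  exists (fun x => x); split => //.
  by apply: (@bounded_opI _ 1) => // x; rewrite mul1r.
have eM : t * nc l * MR < 1.
  rewrite -mulrA (le_lt_trans _ tM) //; apply: lerM2l'; first exact: ltW.
  by rewrite ler_piMl // (ltW MR0).
have hid : forall x : V, 1 * nv x <= nv x by move=> x; rewrite mul1r.
have [W [bW [WA AW]]] := @perturb (fun x => x) E 1 (t * nc l * MR)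
  (fun a x y => erefl) lE id_inv ltr01 hid
  (mulr_ge0 (mulr_ge0 (ltW t0) (nc_ge0 l)) (ltW MR0)) eM hE.
exists (fun y => Rr (W y)); split; first exact: bounded_comp.
have key u : shift_op T l' u = shift_op T l u + (t%:C%C * l) *: u.
  by rewrite /shift_op /l' rmorphB rmorph1 mulrBl mul1r scalerBl opprB addrA addrAC.
by move=> y; rewrite key hR AW.
Qed.

End Main.

End Basics.

Unset Implicit Arguments.
Set Strict Implicit.
Set Printing Implicit Defensive.

Theorem corollary4p5 (R : realType) (V : completeNormedModType R[i])
  (ip : V -> V -> R[i]) (Hip : is_inner ip)
  (T Tstar B : V -> V)
  (HT : bounded_op T) (Hlinv : left_invertible T) (H0 : spec T 0)
  (HTstar : bounded_op Tstar) (Hadj : is_adjoint ip T Tstar)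
  (HB : bounded_op B) (HB1 : forall x, B (Tstar (T x)) = x)
  (HB2 : forall x, Tstar (T (B x)) = x) :
  let T' := fun x => T (B x) in
  (rspec T' `<=` @closed_disc R -> @open_disc R `<=` rspec T `\` lspec T) /\
  ((forall x, `|T x| <= `|x|) -> rspec T' `<=` @closed_disc R ->
     rspec T = spec T /\ spec T = @closed_disc R).
Proof.
move=> T'; split.
- move=> hsp l; rewrite /open_disc /= nc_lt1 => hl; split.
  + exact: (main_i Hip HT Hlinv H0 HTstar Hadj HB HB1 HB2 hsp hl).
  + move=> hls; apply: hls; exact: (linv Hip HT Hlinv HTstar Hadj HB HB1 HB2 hsp hl).
- move=> hT1 hsp.
  have hTn x : nv (T x) <= nv x by have := hT1 x; rewrite !nvE lecR.
  have spc : spec T `<=` @closed_disc R.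
    move=> l hl; rewrite /closed_disc /= nc_le1 leNgt; apply/negP => h; apply: hl.
    exact: (spec_out HT hTn h).
  have cr : @closed_disc R `<=` rspec T.
    move=> l; rewrite /closed_disc /= nc_le1 => hl.
    exact: (rclosed Hip HT Hlinv H0 HTstar Hadj HB HB1 HB2 hsp hl).
  have rs : rspec T `<=` spec T.
    by move=> l hr hi; apply: hr; case: hi => S [bS [h1 h2]]; exists S.
  split; apply/seteqP; split => //.
  + exact: subset_trans spc cr.
  + exact: subset_trans cr rs.
Qed.
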